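(* Let $L_0,\ldots,L_{m-1}$ be Laplacian matrices of non-negatively weighted digraphs on the node set $\{1,\ldots,N\}$, $N\ge2$. Let $\bar{\Delta}=[\mathbf{1}_{N-1},\,-I_{N-1}]\in\mathbb{R}^{(N-1)\times N}$ and $\Delta=\begin{bmatrix}1&0_{1\times(N-1)}\\ \mathbf{1}_{N-1}&-I_{N-1}\end{bmatrix}$ (so that $\Delta\Delta=I_N$). For each $j$ write $\Delta L_j\Delta=\begin{bmatrix}0&*\\0&\tilde{L}_j\end{bmatrix}$ with $\tilde{L}_j\in\mathbb{R}^{(N-1)\times(N-1)}$. If the digraph whose Laplacian is $\sum_{j=0}^{m-1}L_j$ contains a directed spanning tree, then $$\bigcap_{j=0}^{m-1}\mathrm{Eig}(\tilde{L}_j)=\{\mathbf{0}\},$$ where $\mathrm{Eig}(M)$ denotes the subspace spanned by the generalized eigenvectors of $M$ associated with the eigenvalue $0$.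
   Context: A weighted digraph on $\{1,\ldots,N\}$ has adjacency matrix $W=[a_{ij}]$ with $a_{ij}\ge0$, $a_{ii}=0$, and $a_{ij}>0$ iff $(j,i)$ is an edge; its Laplacian is $L=\mathrm{diag}\{\sum_j a_{1j},\ldots,\sum_j a_{Nj}\}-W$, so $L\mathbf{1}_N=0$. A digraph contains a directed spanning tree if some node has a directed path (sequence of edges $(i_1,i_2),(i_2,i_3),\ldots$) to every other node. A generalized eigenvector of $M$ for eigenvalue $\lambda$ is a nonzero $v$ with $(M-\lambda I)^qv=0$ for some positive integer $q$. *)

(* Defs.v *)
From HB Require Import structures.
From mathcomp Require Import all_boot all_order all_algebra.
Set Implicit Arguments. Unset Strict Implicit. Unset Printing Implicit Defensive.
Import Order.TTheory GRing.Theory Num.Theory.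
Local Open Scope ring_scope.

Definition adjacency {R : realFieldType} {N : nat} (W : 'M[R]_N) : Prop :=
  (forall i j, 0 <= W i j) /\ (forall i, W i i = 0).

Definition laplacian {R : realFieldType} {N : nat} (W : 'M[R]_N) : 'M[R]_N :=
  diag_mx (\row_i \sum_k W i k) - W.

Definition edge {R : realFieldType} {N : nat} (W : 'M[R]_N) : rel 'I_N :=
  fun x y => 0 < W y x.

Definition has_spanning_tree {R : realFieldType} {N : nat} (W : 'M[R]_N) : Prop :=
  exists r : 'I_N, forall i : 'I_N, connect (edge W) r i.

Definition Delta {R : realFieldType} (n : nat) : 'M[R]_(1 + n) :=
  block_mx (1 : 'M[R]_1) (0 : 'M[R]_(1, n)) (const_mx 1 : 'M[R]_(n, 1)) (- 1%:M).

Definition Ltilde {R : realFieldType} (n : nat) (L : 'M[R]_(1 + n)) : 'M[R]_n :=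
  drsubmx (Delta n *m L *m Delta n).

Definition gen_eigvec0 {R : realFieldType} {n : nat} (M : 'M[R]_n) (v : 'cV[R]_n) : Prop :=
  v != 0 /\ exists q : nat, (0 < q)%N /\ (M - 0%:M) ^+ q *m v = 0.

Definition Eig0 {R : realFieldType} {n : nat} (M : 'M[R]_n) : 'cV[R]_n -> Prop :=
  fun v => exists (k : nat) (c : 'I_k -> R) (w : 'I_k -> 'cV[R]_n),
    (forall i, gen_eigvec0 M (w i)) /\ v = \sum_(i < k) c i *: w i.

(* Main.v *)
Require Import Defs.
From HB Require Import structures.
From mathcomp Require Import all_boot all_order all_algebra.
From mathcomp Require Import ring.
Set Implicit Arguments. Unset Strict Implicit. Unset Printing Implicit Defensive.
Import Order.TTheory GRing.Theory Num.Theory.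
Local Open Scope ring_scope.

Section S.
Variable R : realFieldType.
Implicit Types N : nat.

Lemma exmax (T : finType) (P : pred T) (f : T -> R) i0 :
  P i0 -> exists2 i, P i & forall j, P j -> f j <= f i.
Proof.
move=> Pi0; case: (@arg_maxP _ R T i0 P f Pi0) => i Pi H; exists i => // j Pj; exact: H.
Qed.

Lemma exmin (T : finType) (P : pred T) (f : T -> R) i0 :
  P i0 -> exists2 i, P i & forall j, P j -> f i <= f j.
Proof.
move=> Pi0; case: (@arg_minP _ R T i0 P f Pi0) => i Pi H; exists i => // j Pj; exact: H.
Qed.

Lemma lapE N (W : 'M[R]_N) (x : 'cV[R]_N) i :
  (laplacian W *m x) i 0 = \sum_k W i k * (x i 0 - x k 0).
Proof.
rewrite /laplacian mulmxBl mul_diag_mx !mxE mulr_suml -sumrB.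
by apply: eq_bigr => k _; rewrite mulrBr.
Qed.



Lemma step N (W : 'M[R]_N) (x : 'cV[R]_N) i k :
  (forall a b, 0 <= W a b) ->
  \sum_l W i l * (x i 0 - x l 0) = 0 ->
  (forall j, x j 0 <= x i 0) -> 0 < W i k -> x k 0 = x i 0.
Proof.
move=> W0 Hs Hm Hk.
have : W i k * (x i 0 - x k 0) = 0.
  apply: (psumr_eq0P _ Hs) => // l _; apply: mulr_ge0 => //; rewrite subr_ge0; exact: Hm.
by move/eqP; rewrite mulf_eq0 (gt_eqF Hk) /= subr_eq0 => /eqP ->.
Qed.

Lemma pathmax N (W : 'M[R]_N) (x : 'cV[R]_N) :
  (forall a b, 0 <= W a b) ->
  (forall i, \sum_l W i l * (x i 0 - x l 0) = 0) ->
  forall p r, path (edge W) r p -> (forall j, x j 0 <= x (last r p) 0) ->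
  forall j, x j 0 <= x r 0.
Proof.
move=> W0 Hs; elim=> [|y p IH] r //= /andP[e pp] Hl.
have Hy := IH _ pp Hl.
by rewrite (@step N W x y r W0 (Hs y) Hy e).
Qed.

Lemma treemax N (W : 'M[R]_N) (x : 'cV[R]_N) r :
  (forall a b, 0 <= W a b) ->
  (forall i, \sum_l W i l * (x i 0 - x l 0) = 0) ->
  (forall i, connect (edge W) r i) -> forall j, x j 0 <= x r 0.
Proof.
move=> W0 Hs Hc.
have [i _ Hi] := @exmax _ predT (fun i => x i 0) r isT.
move: (Hc i) => /connectP[p pp li].
apply: (@pathmax N W x W0 Hs p r pp); rewrite -li => j; exact: Hi.
Qed.

Lemma treeconst N (W : 'M[R]_N) (x : 'cV[R]_N) r :
  (forall a b, 0 <= W a b) ->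
  (forall i, \sum_l W i l * (x i 0 - x l 0) = 0) ->
  (forall i, connect (edge W) r i) -> forall j, x j 0 = x r 0.
Proof.
move=> W0 Hs Hc j; apply/eqP; rewrite eq_le (@treemax N W x r W0 Hs Hc) /=.
have Hs' : forall i, \sum_l W i l * ((- x) i 0 - (- x) l 0) = 0.
  move=> i; rewrite -[RHS]oppr0 -{2}(Hs i) -sumrN; apply: eq_bigr => l _ /=.
  by rewrite !mxE; ring.
have := @treemax N W (- x) r W0 Hs' Hc j; by rewrite !mxE lerN2.
Qed.

Lemma ss_le N (W : 'M[R]_N) (x : 'cV[R]_N) :
  adjacency W -> laplacian W *m (laplacian W *m x) = 0 ->
  forall i, (laplacian W *m x) i 0 <= 0.
Proof.
move=> [W0 _] H i.
set y := laplacian W *m x.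
case: (ltP 0 (y i 0)) => // Hpos; exfalso.
have [i1 _ Hi1] := @exmax _ predT (fun i => y i 0) i isT.
have Hs : forall a, \sum_l W a l * (y a 0 - y l 0) = 0.
  by move=> a; rewrite -lapE H mxE.
pose P := [pred a | y a 0 == y i1 0].
have [j Pj Hj] := @exmin _ P (fun a => x a 0) i1 (eqxx _).
have ymax : forall l, y l 0 <= y j 0 by move=> l; rewrite (eqP Pj); exact: Hi1.
have : y j 0 <= 0.
  rewrite /y lapE; apply: sumr_le0 => k _.
  have := W0 j k; rewrite le_eqVlt => /orP[/eqP <-|Hk]; first by rewrite mul0r.
  rewrite pmulr_rle0 // subr_le0; apply: Hj; rewrite /P inE /=.
  by rewrite (@step N W y j k W0 (Hs j) ymax Hk).
rewrite (eqP Pj) => Hle.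
have := Hi1 i isT; rewrite /= => Hii.
have := lt_le_trans Hpos (le_trans Hii Hle); by rewrite ltxx.
Qed.


Lemma ss N (W : 'M[R]_N) (x : 'cV[R]_N) :
  adjacency W -> laplacian W *m (laplacian W *m x) = 0 -> laplacian W *m x = 0.
Proof.
move=> HW H; apply/matrixP => i j; rewrite ord1 [RHS]mxE.
apply/eqP; rewrite eq_le (ss_le HW H) /=.
have H' : laplacian W *m (laplacian W *m (- x)) = 0 by rewrite !mulmxN H oppr0.
by have := ss_le HW H' i; rewrite mulmxN mxE oppr_le0.
Qed.

Lemma ssq N (W : 'M[R]_N) (x : 'cV[R]_N) q :
  adjacency W -> (0 < q)%N -> laplacian W ^+ q *m x = 0 -> laplacian W *m x = 0.
Proof.
move=> HW; elim: q x => // q IH x _ H.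
have E : forall k (y : 'cV[R]_N), laplacian W ^+ k.+1 *m y = laplacian W *m (laplacian W ^+ k *m y).
  by move=> k y; rewrite exprS -mulmxE mulmxA.
case: q IH H => [|q] IH H; first by rewrite expr1 in H.
apply: (IH x) => //; rewrite E; apply: (ss HW); by rewrite -!E.
Qed.

Definition iota n (w : 'cV[R]_n) : 'cV[R]_(1+n) := col_mx 0 (- w).
Definition one n : 'cV[R]_(1+n) := const_mx 1.

Lemma DD n : Delta n *m Delta n = 1%:M :> 'M[R]_(1+n).
Proof.
rewrite /Delta mulmx_block !mul1mx !mul0mx !mulmx0 !addr0 !add0r mulNmx mul1mx.
rewrite mulmx1 subrr mulNmx mulmxN mulmx1 opprK.
by rewrite -[X in block_mx X]/(1%:M : 'M[R]_1) -scalar_mx_block.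
Qed.

Lemma Dcol n (w : 'cV[R]_n) : Delta n *m col_mx 0 w = iota w.
Proof.
by rewrite /Delta mul_block_col !mulmx0 mul0mx !add0r mulNmx mul1mx.
Qed.

Lemma Bcol n (B : 'M[R]_(1+n)) (w : 'cV[R]_n) :
  B *m col_mx 0 w = col_mx (ursubmx B *m w) (drsubmx B *m w).
Proof. by rewrite -{1}[B]submxK mul_block_col !mulmx0 !add0r. Qed.

Lemma key n (L : 'M[R]_(1+n)) (w : 'cV[R]_n) :
  exists a : R, L *m iota w = a *: one n + iota (Ltilde L *m w).
Proof.
have E : L *m iota w = Delta n *m (Delta n *m L *m Delta n *m col_mx 0 w).
  by rewrite -Dcol !mulmxA DD mul1mx.
rewrite E Bcol /Ltilde.
set a := ursubmx _ *m w; set z := drsubmx _ *m w.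
exists (a 0 0).
rewrite /Delta mul_block_col mul1mx mul0mx addr0 mulNmx mul1mx /iota /one.
apply/matrixP => i j; rewrite !mxE; case: splitP => k _; rewrite !mxE.
  by rewrite !ord1 mulr1 addr0.
by rewrite big_ord1 !mxE !ord1 mul1r mulr1.
Qed.
End S.
Section T.
Variable R : realFieldType.

Lemma Lone n (W : 'M[R]_(1+n)) : laplacian W *m one R n = 0.
Proof.
apply/matrixP => i j; rewrite ord1 lapE [RHS]mxE; apply: big1 => k _.
by rewrite !mxE subrr mulr0.
Qed.

Lemma keyk n (W : 'M[R]_(1+n)) (w : 'cV[R]_n) k :
  exists c : R, laplacian W ^+ k *m iota w = c *: one R n + iota (Ltilde (laplacian W) ^+ k *m w).
Proof.
elim: k => [|k [c Hc]].
  by exists 0; rewrite !expr0 !mul1mx scale0r add0r.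
have [a Ha] := key (laplacian W) (Ltilde (laplacian W) ^+ k *m w).
exists a.
rewrite exprS -mulmxE -mulmxA Hc mulmxDr -scalemxAr Lone scaler0 add0r Ha.
by rewrite exprS -mulmxE -mulmxA.
Qed.

Lemma iota_sum n k (c : 'I_k -> R) (w : 'I_k -> 'cV[R]_n) :
  iota (\sum_(i < k) c i *: w i) = \sum_(i < k) c i *: iota (w i).
Proof.
elim/big_rec2: _ => [|i a b _ <-]; first by rewrite /iota oppr0 col_mx0.
by rewrite /iota scale_col_mx add_col_mx scaler0 addr0 opprD scalerN.
Qed.

Theorem lemma7_aux (n m : nat) (Hn : (0 < n)%N)
  (W : 'I_m -> 'M[R]_(1 + n)) (L : 'I_m -> 'M[R]_(1 + n))
  (HW : forall j, adjacency (W j))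
  (HL : forall j, L j = laplacian (W j))
  (Htree : has_spanning_tree (\sum_(j < m) W j)) :
  forall v : 'cV[R]_n, (forall j : 'I_m, Eig0 (Ltilde (L j)) v) -> v = 0.
Proof.
move=> v Hv.
have Hker : forall j, L j *m iota v = 0.
  move=> j; have [k [c [w [Hw ->]]]] := Hv j.
  rewrite iota_sum mulmx_sumr; apply: big1 => i _; rewrite -scalemxAr.
  suff -> : L j *m iota (w i) = 0 by rewrite scaler0.
  have [_ [q [q0 Hq]]] := Hw i.
  have Z : (0%:M : 'M[R]_n) = 0 by apply/matrixP => a b; rewrite !mxE mul0rn.
  rewrite Z subr0 HL in Hq.
  have [cc Hc] := keyk (W j) (w i) q.
  rewrite Hq /iota oppr0 col_mx0 addr0 in Hc.
  rewrite HL; apply: (@ssq _ _ _ _ q.+1 (HW j)) => //.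
  by rewrite exprS -mulmxE -mulmxA Hc -scalemxAr Lone scaler0.
set x := iota v.
have W0 : forall a b, 0 <= (\sum_(j < m) W j) a b.
  by move=> a b; rewrite summxE; apply: sumr_ge0 => j _; case: (HW j) => H _; exact: H.
have Hs : forall i, \sum_l (\sum_(j < m) W j) i l * (x i 0 - x l 0) = 0.
  move=> i; under eq_bigr do rewrite summxE mulr_suml.
  rewrite exchange_big /=; apply: big1 => j _.
  by rewrite -lapE -HL Hker mxE.
have [r Hr] := Htree.
have Hc := treeconst W0 Hs Hr.
have X0 : x = 0.
  apply/matrixP => i j; rewrite ord1 [RHS]mxE (Hc i) -(Hc ord0).
  have -> : (ord0 : 'I_(1+n)) = lshift n (0 : 'I_1) by apply: val_inj.
  by rewrite /x /iota col_mxEu mxE.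
move: X0; rewrite /x /iota -col_mx0 => /eq_col_mx [_ /eqP].
by rewrite oppr_eq0 => /eqP.
Qed.
End T.

Unset Implicit Arguments.
Theorem lemma7 (R : realFieldType) (n m : nat) (Hn : (0 < n)%N)
  (W : 'I_m -> 'M[R]_(1 + n)) (L : 'I_m -> 'M[R]_(1 + n))
  (HW : forall j, adjacency (W j))
  (HL : forall j, L j = laplacian (W j))
  (Htree : has_spanning_tree (\sum_(j < m) W j)) :
  forall v : 'cV[R]_n, (forall j : 'I_m, Eig0 (Ltilde (L j)) v) -> v = 0.
Proof. exact: (@lemma7_aux R n m Hn W L HW HL Htree). Qed.
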